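(* Let $n\ge2$ and let $M'\subset\mathbb{C}^{n+1}$ be a real-analytic or smooth real hypersurface through $0$ defined near $0$ by $$\rho(W,\bar W)=-\mathrm{Im}\,w_{n+1}+\sum_{j=1}^{n-1}|w_j|^2+\phi(W,\bar W),\qquad \phi=O(|W|^3),$$ $W=(w_1,\dots,w_{n+1})$. For $1\le k\le n$ let $$\Lambda_k=2i\Big(\frac{\partial\rho}{\partial\bar w_{n+1}}\frac{\partial}{\partial\bar w_k}-\frac{\partial\rho}{\partial\bar w_k}\frac{\partial}{\partial\bar w_{n+1}}\Big),$$ let $\rho_W=(\partial\rho/\partial w_1,\dots,\partial\rho/\partial w_{n+1})$, and for $1\le i_1\le\dots\le i_l\le n$ let $\Delta_{i_1\dots i_l}(q)$ be the determinant of the $(n+1)\times(n+1)$ matrix whose rows are $\rho_W,\Lambda_1\rho_W,\dots,\Lambda_{n-1}\rho_W,\Lambda_{i_1}\cdots\Lambda_{i_l}\rho_W$, evaluated at $q\in M'$. Assume $M'$ is $l$-nondegenerate at $0$ for some $l\ge2$. Then there exist $1\le i_1\le\dots\le i_l\le n$ such that $\Delta_{i_1\dots i_l}(0)\ne0$.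
   Context: The $\Lambda_k$, $1\le k\le n$, form a local basis of CR vector fields of $M'$. For $E_l(p)=\mathrm{Span}_{\mathbb{C}}\{\Lambda^\alpha\rho_W(p):0\le|\alpha|\le l\}$ with $\Lambda^\alpha=\Lambda_1^{\alpha_1}\cdots\Lambda_n^{\alpha_n}$, $M'$ is $k$-nondegenerate at $p$ if $E_{k-1}(p)\ne E_k(p)=\mathbb{C}^{n+1}$. *)

(* Defs.v *)
From HB Require Import structures.
From mathcomp Require Import all_boot all_order all_algebra.
From mathcomp Require Import all_classical all_reals all_analysis.
From mathcomp Require Import complex.
Set Implicit Arguments. Unset Strict Implicit. Unset Printing Implicit Defensive.
Import Order.TTheory GRing.Theory Num.Theory.
Import numFieldNormedType.Exports.
Local Open Scope ring_scope.
Local Open Scope complex_scope.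

Section Defs.
Variables (R : realType) (n : nat).

(* Real coordinates of C^{n+1}: a point W is a row vector p with
   Re w_j = p 0 (lshift _ j) and Im w_j = p 0 (rshift _ j), j : 'I_(n.+1),
   where index j (0-based) corresponds to w_{j+1}; w_{n+1} is ord_max. *)
Definition Pt := 'rV[R]_(n.+1 + n.+1).
Definition xc (j : 'I_n.+1) (p : Pt) : R := p 0 (lshift n.+1 j).
Definition yc (j : 'I_n.+1) (p : Pt) : R := p 0 (rshift n.+1 j).
Definition ex (j : 'I_n.+1) : Pt := delta_mx 0 (lshift n.+1 j).
Definition ey (j : 'I_n.+1) : Pt := delta_mx 0 (rshift n.+1 j).

Definition CFun := Pt -> R[i].

Definition partial (v : Pt) (f : CFun) : CFun := fun p =>
  Complex ('D_v (fun q => complex.Re (f q)) p) ('D_v (fun q => complex.Im (f q)) p).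

Definition dw (j : 'I_n.+1) (f : CFun) : CFun := fun p =>
  (partial (ex j) f p - 'i * partial (ey j) f p) / 2%:R.
Definition dwbar (j : 'I_n.+1) (f : CFun) : CFun := fun p =>
  (partial (ex j) f p + 'i * partial (ey j) f p) / 2%:R.

Definition liftC (rho : Pt -> R) : CFun := fun p => (rho p)%:C.

(* Lambda_{k+1} for k : nat (0-based), acting on complex-valued functions:
   Lambda_k = 2i (rho_{wbar_{n+1}} d/dwbar_k - rho_{wbar_k} d/dwbar_{n+1}) *)
Definition Lam (rho : Pt -> R) (k : nat) (f : CFun) : CFun := fun p =>
  2%:R * 'i * (dwbar ord_max (liftC rho) p * dwbar (inord k) f p
              - dwbar (inord k) (liftC rho) p * dwbar ord_max f p).

Definition rhoW (rho : Pt -> R) : 'I_n.+1 -> CFun := fun j => dw j (liftC rho).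

(* Lambda^alpha = Lambda_1^{alpha_1} ... Lambda_n^{alpha_n} (Lambda_n applied first) *)
Definition Lam_alpha (rho : Pt -> R) (l : nat) (alpha : {ffun 'I_n -> 'I_l.+1})
  (f : CFun) : CFun :=
  foldr (fun (i : 'I_n) g => iter (alpha i) (Lam rho i) g) f (enum 'I_n).

Definition Lam_seq (rho : Pt -> R) (s : seq 'I_n) (f : CFun) : CFun :=
  foldr (fun (i : 'I_n) g => Lam rho i g) f s.

(* E_l(p) = Span_C { Lambda^alpha rho_W (p) : |alpha| <= l }, as a subspace
   (row space) of C^{n+1} = 'rV[R[i]]_(n.+1). *)
Definition Espace (rho : Pt -> R) (l : nat) (p : Pt) : 'M[R[i]]_(n.+1) :=
  (\sum_(alpha : {ffun 'I_n -> 'I_l.+1} | (\sum_i (alpha i : nat) <= l)%N)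
     <<\row_j Lam_alpha rho alpha (rhoW rho j) p>>)%MS.

Definition k_nondegenerate (rho : Pt -> R) (k : nat) (p : Pt) : Prop :=
  ~~ (Espace rho k.-1 p == Espace rho k p)%MS /\ (Espace rho k p == 1%:M)%MS.

Definition Delta_mx (rho : Pt -> R) (s : seq 'I_n) (q : Pt) : 'M[R[i]]_(n.+1) :=
  \matrix_(r < n.+1, j < n.+1)
    (if (r == 0 :> nat) then rhoW rho j q
     else if (r < n)%N then Lam rho r.-1 (rhoW rho j) q
     else Lam_seq rho s (rhoW rho j) q).

Definition iterD (ds : seq 'I_(n.+1 + n.+1)) (f : Pt -> R) : Pt -> R :=
  foldr (fun d g => fun p => 'D_(delta_mx 0 d : Pt) g p) f ds.

Definition smooth_near0 (rho : Pt -> R) : Prop :=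
  exists2 eps : R, 0 < eps &
    forall (ds : seq 'I_(n.+1 + n.+1)) (p : Pt), `|p| < eps ->
      differentiable (iterD ds rho) p.

Definition model (p : Pt) : R :=
  - yc ord_max p + \sum_(j < n.+1 | (j < n.-1)%N) (xc j p ^+ 2 + yc j p ^+ 2).

End Defs.

(* Main.v *)
Require Import Defs.
From HB Require Import structures.
From mathcomp Require Import all_boot all_order all_algebra.
From mathcomp Require Import all_classical all_reals all_analysis.
From mathcomp Require Import complex.
From mathcomp Require Import ring lra zify.
From Stdlib Require Import Classical.
Import Order.TTheory GRing.Theory Num.Theory.
Import numFieldNormedType.Exports.
Local Open Scope ring_scope.

Module A1.
Import Defs.
Import Order.TTheory GRing.Theory Num.Theory.
Import numFieldNormedType.Exports.
Local Open Scope ring_scope.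
Local Open Scope classical_set_scope.

Lemma cvg_eps (R : realType) (g : R -> R) (L : R) :
  (forall e, 0 < e -> exists2 d, 0 < d & forall h, h != 0 -> `|h| < d -> `|g h - L| <= e) ->
  g @ 0^' --> L.
Proof.
move=> H; apply/cvgrPdist_le => e e0; have [d d0 Hd] := H e e0.
near=> h; rewrite distrC; apply: Hd.
  by near: h; exact: nbhs_dnbhs_neq.
by near: h; apply: dnbhs0_lt.
Unshelve. all: by end_near. Qed.

Lemma cont_bound (R : realType) (V : normedModType R) (F : V -> R) :
  {for 0, continuous F} -> exists2 d, 0 < d & forall q, `|q| < d -> `|F q| <= `|F 0| + 1.
Proof.
move=> /cvgrPdist_lt/(_ 1 ltr01) /nbhs_norm0P [d d0 Hd]; exists d => // q /Hd /= H.
have -> : F q = F 0 - (F 0 - F q) by rewrite opprB addrC subrK.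
by apply: (le_trans (ler_normB _ _)); rewrite lerD2l ltW.
Qed.
Lemma is_derive_lim (R : realType) (V W : normedModType R) (f : V -> W) a v L :
  (fun h : R => h^-1 *: (f (h *: v + a) - f a)) @ 0^' --> L -> is_derive a v f L.
Proof.
move=> H; split; first by apply/cvg_ex; exists L.
exact: cvg_lim.
Qed.

Lemma line_derive (R : realType) (V : normedModType R) (f : V -> R) p v s0 L :
  is_derive (s0 *: v + p) v f L -> is_derive s0 1 (fun s : R => f (s *: v + p)) L.
Proof.
move=> [df dv]; apply: is_derive_lim.
have -> : (fun h : R => h^-1 *: (f ((h *: 1 + s0) *: v + p) - f (s0 *: v + p))) =
  (fun h => h^-1 *: ((f \o shift (s0*:v+p)) (h *: v) - f (s0*:v+p))).
  by apply/funext => h /=; rewrite /shift [_ *: 1]mulr1 scalerDl addrA.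
by rewrite -dv; exact: df.
Qed.
Section Model.
Variables (R : realType) (n : nat).
Local Notation Pt := (Pt R n).

Definition Lm (p v : Pt) : R := - yc ord_max v +
  \sum_(j < n.+1 | (j < n.-1)%N) (2 * (xc j p * xc j v + yc j p * yc j v)).
Definition Qm (v : Pt) : R := \sum_(j < n.+1 | (j < n.-1)%N) (xc j v ^+ 2 + yc j v ^+ 2).
Definition Bm (u v : Pt) : R :=
  \sum_(j < n.+1 | (j < n.-1)%N) (2 * (xc j u * xc j v + yc j u * yc j v)).

Lemma xcE j (s : R) (v p : Pt) : xc j (s *: v + p) = s * xc j v + xc j p.
Proof. by rewrite /xc !mxE. Qed.
Lemma ycE j (s : R) (v p : Pt) : yc j (s *: v + p) = s * yc j v + yc j p.
Proof. by rewrite /yc !mxE. Qed.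

Lemma model_exp (s : R) (v p : Pt) :
  model (s *: v + p) = model p + s * Lm p v + s ^+ 2 * Qm v.
Proof.
rewrite /model /Lm /Qm ycE.
under eq_bigr do rewrite xcE ycE.
set P := fun j : 'I_n.+1 => (j < n.-1)%N.
have E : \sum_(j < n.+1 | P j) ((s * xc j v + xc j p) ^+ 2 + (s * yc j v + yc j p) ^+ 2) =
  \sum_(j < n.+1 | P j) (xc j p ^+ 2 + yc j p ^+ 2) +
  \sum_(j < n.+1 | P j) (s * (2 * (xc j p * xc j v + yc j p * yc j v))) +
  \sum_(j < n.+1 | P j) (s ^+ 2 * (xc j v ^+ 2 + yc j v ^+ 2)).
  by rewrite -!big_split /=; apply: eq_bigr => j _; ring.
rewrite E -!mulr_sumr; ring.
Qed.

Lemma Lm_exp (s : R) (u p v : Pt) : Lm (s *: u + p) v = Lm p v + s * Bm u v.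
Proof.
rewrite /Lm /Bm; under eq_bigr do rewrite xcE ycE.
set P := fun j : 'I_n.+1 => (j < n.-1)%N.
have E : \sum_(j < n.+1 | P j) (2 * ((s * xc j u + xc j p) * xc j v + (s * yc j u + yc j p) * yc j v)) =
  \sum_(j < n.+1 | P j) (2 * (xc j p * xc j v + yc j p * yc j v)) +
  \sum_(j < n.+1 | P j) (s * (2 * (xc j u * xc j v + yc j u * yc j v))).
  by rewrite -!big_split /=; apply: eq_bigr => j _; ring.
rewrite E -!mulr_sumr; ring.
Qed.


Lemma model_derive (p v : Pt) : is_derive p v (@model R n) (Lm p v).
Proof.
apply: is_derive_lim; apply: cvg_eps => e e0.
exists (e / (`|Qm v| + 1)); first by rewrite divr_gt0 // ltr_pwDr.
move=> h h0 hlt.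
have -> : h^-1 *: (model (h *: v + p) - model p) - Lm p v = h * Qm v.
  rewrite model_exp -[_ *: _]/(_ * _); field; exact: h0.
rewrite normrM; rewrite ltr_pdivlMr ?ltr_pwDr // in hlt.
apply: (le_trans _ (ltW hlt)); rewrite ler_wpM2l //; lra.
Qed.

Lemma Lm_derive (p u v : Pt) : is_derive p u (fun q => Lm q v) (Bm u v).
Proof.
apply: is_derive_lim; apply: cvg_eps => e e0; exists 1 => // h h0 _.
rewrite Lm_exp -[_ *: _]/(_ * _).
have -> : h^-1 * (Lm p v + h * Bm u v - Lm p v) - Bm u v = 0 by field.
by rewrite normr0 ltW.
Qed.

End Model.
Arguments Lm {R n}. Arguments Qm {R n}. Arguments Bm {R n}.
End A1.
Import A1.

Module A2.
Import Defs.
Import Order.TTheory GRing.Theory Num.Theory.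
Import numFieldNormedType.Exports.
Local Open Scope ring_scope.
Local Open Scope classical_set_scope.

Section Norms.
Variables (R : realType) (n : nat).
Local Notation Pt := (Pt R n).
Definition dir (d : 'I_(n.+1 + n.+1)) : Pt := delta_mx 0 d.

Lemma norm_dir d : `|dir d| <= 1.
Proof.
rewrite -[`|_|]/(mx_norm _) mx_normrE; apply: bigmax_le => // ij _.
rewrite /dir mxE; case: (_ && _) => /=; by rewrite ?normr1 ?normr0.
Qed.

Lemma norm_comb (s t : R) (u v : Pt) : `|u| <= 1 -> `|v| <= 1 ->
  `|s *: v + t *: u| <= `|s| + `|t|.
Proof.
move=> hu hv; apply: (le_trans (ler_normD _ _)); rewrite !normrZ.
apply: lerD; rewrite -[X in _ <= X]mulr1 ler_wpM2l //.
Qed.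
End Norms.
Arguments dir {R n} d.
Arguments norm_dir {R n} d.
Arguments norm_comb {R n}.

Lemma aux (R : realFieldType) (C M a k e : R) : 0 < C -> 0 < a -> 0 < k -> k <= 1 -> k * M <= e/2 ->
  a <= e * k / (18 * C) ->
  a^-1 * ((C * (a + k*a)^+3 + C * a^+3)/(k*a) + k*a*M) <= e.
Proof.
move=> C0 a0 k0 k1 kM ha.
have -> : a^-1 * ((C * (a + k*a)^+3 + C * a^+3)/(k*a) + k*a*M) =
   C * a * ((1+k)^+3 + 1) / k + k * M.
  by field; rewrite ?gt_eqF.
have h8 : (1 + k)^+3 <= 8.
  have : (1 + k)^+3 <= 2^+3 by rewrite lerXn2r ?nnegrE //; lra.
  by rewrite (_ : 2^+3 = 8) //; rewrite !exprS expr0; ring.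
have : C * a * ((1+k)^+3 + 1) / k <= e / 2.
  rewrite ler_pdivrMr // -mulrA; apply: (@le_trans _ _ (C * (a * 9))).
    by rewrite ler_pM2l // ler_pM2l //; lra.
  move: ha; rewrite ler_pdivlMr ?mulr_gt0 //; lra.
lra.
Qed.

Section Core.
Variables (R : realType) (n : nat) (rho : Pt R n -> R) (eps C del : R).
Local Notation Pt := (Pt R n).
Hypothesis eps0 : 0 < eps.
Hypothesis Hsm : forall ds (p : Pt), `|p| < eps -> differentiable (iterD ds rho) p.
Hypothesis C0 : 0 < C.
Hypothesis del0 : 0 < del.
Hypothesis Hb : forall p : Pt, `|p| < del -> `|rho p - model p| <= C * `|p| ^+ 3.

Variables (d1 d2 : 'I_(n.+1 + n.+1)).
Let u : Pt := @dir R n d1.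
Let v : Pt := @dir R n d2.
Let F := fun q : Pt => 'D_v (fun q => 'D_v rho q) q.

Lemma core : exists2 r0 : R, 0 < r0 & exists M : R, forall t s : R, 0 < s -> `|t| + s < r0 ->
  `|'D_v rho (t *: u) - Lm (t *: u) v| <=
     (C * (`|t| + s) ^+ 3 + C * `|t| ^+ 3) / s + s * M.
Proof.
have [d0 d00 Hd0] : exists2 d0, 0 < d0 & forall q, `|q| < d0 -> `|F q| <= `|F 0| + 1.
  apply: cont_bound; apply: differentiable_continuous.
  by apply: (Hsm [:: d2; d2]); rewrite normr0.
exists (Num.min eps (Num.min del d0)); first by rewrite !lt_min eps0 del0 d00.
exists (`|F 0| + 1 + `|Bm v v|) => t s s0 ts.
have Hq x : `|x| <= s -> [/\ `|x *: v + t *: u| < eps, `|x *: v + t *: u| < del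
    & `|x *: v + t *: u| < d0].
  move=> xs; have : `|x *: v + t *: u| < Num.min eps (Num.min del d0).
    apply: le_lt_trans; first exact: (norm_comb x t u v (norm_dir _) (norm_dir _)).
    by apply: le_lt_trans ts; lra.
  by rewrite !lt_min => /and3P[].
pose psi : R -> R := (fun x : R => rho (x *: v + t *: u)) - (fun x => model (x *: v + t *: u)).
pose psi1 : R -> R := (fun x : R => 'D_v rho (x *: v + t *: u)) - (fun x => Lm (x *: v + t *: u) v).
pose psi2 : R -> R := (fun x : R => F (x *: v + t *: u)) - (fun x => Bm v v).
have D1 (x : R) : `|x| <= s -> is_derive x 1 psi (psi1 x).
  move=> /Hq[qe _ _]; rewrite /psi /psi1.
  apply: is_deriveB.
    apply: (@line_derive R Pt rho (t *: u) v x).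
    exact/derivableP/diff_derivable/(Hsm [::]).
  apply: line_derive; exact: model_derive.
have D2 (x : R) : `|x| <= s -> is_derive x 1 psi1 (psi2 x).
  move=> /Hq[qe _ _]; rewrite /psi1 /psi2.
  apply: is_deriveB.
    apply: (@line_derive R Pt (fun q => 'D_v rho q) (t *: u) v x).
    exact/derivableP/diff_derivable/(Hsm [:: d2]).
  apply: (@line_derive R Pt (fun q => Lm q v) (t *: u) v x); exact: Lm_derive.
have inI (x : R) : x \in `]0, s[%R -> `|x| <= s.
  by rewrite in_itv /= => /andP[x0 xs]; rewrite ger0_norm ltW.
have cont1 : {within `[0, s], continuous psi}.
  apply: derivable_within_continuous => x; rewrite in_itv /= => /andP[x0 xs].
  by case: (D1 x _); rewrite // ger0_norm.
have [c1 c1in E1] := MVT s0 (fun x xi => D1 x (inI x xi)) cont1.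
move: c1in; rewrite in_itv /= => /andP[c10 c1s].
have cont2 : {within `[0, c1], continuous psi1}.
  apply: derivable_within_continuous => x; rewrite in_itv /= => /andP[x0 xs].
  by case: (D2 x _); rewrite // ger0_norm // (le_trans xs) // ltW.
have inI2 (x : R) : x \in `]0, c1[%R -> `|x| <= s.
  by rewrite in_itv /= => /andP[x0 xs]; rewrite ger0_norm ltW // (lt_trans xs).
have [c2 c2in E2] := MVT c10 (fun x xi => D2 x (inI2 x xi)) cont2.
have c2s : `|c2| <= s by apply: inI2; exact: c2in.
have P10 : psi1 0 = 'D_v rho (t *: u) - Lm (t *: u) v.
  by rewrite /psi1 -[LHS]/('D_v rho (0 *: v + t *: u) - Lm (0 *: v + t *: u) v) scale0r add0r.
have e1 : (psi s - psi 0) / s = psi1 c1 by rewrite E1 subr0 mulfK // gt_eqF.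
have e2 : psi2 c2 * c1 = psi1 c1 - psi1 0 by rewrite E2 subr0.
have -> : 'D_v rho (t *: u) - Lm (t *: u) v = (psi s - psi 0) / s - psi2 c2 * c1.
  by rewrite e1 e2 -P10; ring.
have B1 : `|psi s| <= C * (`|t| + s) ^+ 3.
  have hs : `|s| <= s by rewrite ger0_norm // ltW.
  have [_ qd _] := Hq s hs.
  rewrite -[psi s]/(rho (s *: v + t *: u) - model (s *: v + t *: u)).
  apply: le_trans (Hb _ qd) _; apply: ler_wpM2l; first exact: ltW.
  rewrite ler_pXn2r // ?nnegrE ?addr_ge0 ?(ltW s0) //.
  apply: le_trans; first exact: (norm_comb s t u v (norm_dir _) (norm_dir _)).
  by rewrite (ger0_norm (ltW s0)) addrC.
have B0 : `|psi 0| <= C * `|t| ^+ 3.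
  have hs : `|0 : R| <= s by rewrite normr0 ltW.
  have [_ qd _] := Hq 0 hs.
  rewrite -[psi 0]/(rho (0 *: v + t *: u) - model (0 *: v + t *: u)).
  apply: le_trans (Hb _ qd) _; apply: ler_wpM2l; first exact: ltW.
  rewrite ler_pXn2r // ?nnegrE ?addr_ge0 ?(ltW s0) //.
  apply: le_trans; first exact: (norm_comb 0 t u v (norm_dir _) (norm_dir _)).
  by rewrite normr0 add0r.
have B2 : `|psi2 c2| <= `|F 0| + 1 + `|Bm v v|.
  have [_ _ qd] := Hq c2 c2s.
  rewrite -[psi2 c2]/(F (c2 *: v + t *: u) - Bm v v).
  apply: le_trans (ler_normB _ _) _; apply: lerD => //; exact: Hd0.
apply: le_trans (ler_normB _ _) _; apply: lerD.
  rewrite normrM normfV (gtr0_norm s0); apply: ler_wpM2r; first by rewrite invr_ge0 (ltW s0).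
  apply: le_trans (ler_normB _ _) _; exact: lerD.
rewrite normrM (gtr0_norm c10) mulrC; apply: ler_pM; [exact: ltW | exact: normr_ge0 | exact: ltW | exact: B2].
Qed.

Lemma rho0 : rho 0 = model (0 : Pt).
Proof.
have := Hb 0; rewrite normr0 expr0n /= mulr0 => /(_ del0).
by rewrite normr_le0 subr_eq0 => /eqP.
Qed.

Lemma D1 (w : Pt) : `|w| <= 1 -> 'D_w rho 0 = Lm 0 w.
Proof.
move=> w1; apply: derive_val; apply: is_derive_lim; apply: cvg_eps => e e0.
set K := C + `|Qm w|.
have K0 : 0 < K by rewrite /K; apply: (lt_le_trans C0); rewrite lerDl.
exists (Num.min 1 (Num.min del (e / K))).
  by rewrite !lt_min ltr01 del0 divr_gt0.
move=> h h0; rewrite !lt_min => /and3P[h1 hd he].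
rewrite addr0 rho0.
have hw : `|h *: w| <= `|h|.
  by rewrite normrZ -[X in _ <= X]mulr1 ler_wpM2l.
have X := Hb (h *: w) (le_lt_trans hw hd).
move: X; rewrite -[h *: w]addr0 model_exp addr0 => X.
have -> : h^-1 *: (rho (h *: w) - model (0:Pt)) - Lm 0 w =
    h^-1 * (rho (h *: w) - (model (0:Pt) + h * Lm 0 w + h ^+ 2 * Qm w)) + h * Qm w.
  by rewrite -[_ *: _]/(_ * _); field.
apply: le_trans (ler_normD _ _) _.
have hp : 0 < `|h| by rewrite normr_gt0.
apply: (@le_trans _ _ (`|h| * K)); last first.
  by rewrite -ler_pdivlMr // ltW.
rewrite /K [X in _ <= X]mulrDr; apply: lerD; last by rewrite normrM.
rewrite normrM normfV ler_pdivrMl //.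
apply: le_trans X _.
apply: (@le_trans _ _ (C * `|h|^+3)).
  by rewrite ler_pM2l // ler_pXn2r // ?nnegrE.
set a := `|h|; move: hp h1; rewrite -/a => hp h1.
have a2 : 0 < a * a by apply: mulr_gt0.
rewrite !exprS expr0 mulr1.
have -> : a * (a * C) = C * (a * a) * 1 by ring.
have -> : C * (a * (a * a)) = C * (a * a) * a by ring.
by rewrite ler_pM2l ?mulr_gt0 // ltW.
Qed.

Lemma D2 : 'D_u (fun q => 'D_v rho q) 0 = Bm u v.
Proof.
have [r0 r00 [M HM]] := core.
apply: derive_val; apply: is_derive_lim; apply: cvg_eps => e e0.
set k := Num.min 1 (e / (2 * (`|M| + 1))).
have M1 : 0 < `|M| + 1 by rewrite ltr_pwDr.
have k0 : 0 < k by rewrite lt_min ltr01 divr_gt0 // mulr_gt0.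
have k1 : k <= 1 by rewrite ge_min lexx.
have kM : k * M <= e / 2.
  apply: (@le_trans _ _ (k * (`|M| + 1))).
    by rewrite ler_pM2l // (le_trans (ler_norm M)) // lerDl.
  have : k <= e / (2 * (`|M| + 1)) by rewrite ge_min lexx orbT.
  rewrite -ler_pdivlMr // => /le_trans; apply.
  by rewrite invfM mulrA.
exists (Num.min (r0 / 2) (e * k / (18 * C))).
  by rewrite lt_min divr_gt0 // divr_gt0 ?mulr_gt0.
move=> h h0; rewrite lt_min => /andP[hr he].
rewrite addr0 (D1 v (norm_dir d2)).
have LE := @Lm_exp R n h u 0 v; rewrite addr0 in LE.
have -> : h^-1 *: ('D_v rho (h *: u) - Lm 0 v) - Bm u v =
    h^-1 * ('D_v rho (h *: u) - Lm (h *: u) v).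
  by rewrite LE -[_ *: _]/(_ * _); field.
have hp : 0 < `|h| by rewrite normr_gt0.
have HMh := HM h (k * `|h|) (mulr_gt0 k0 hp).
rewrite normrM normfV.
have A := aux _ _ _ _ _ _ C0 hp k0 k1 kM (ltW he).
apply: le_trans A.
rewrite ler_pM2l ?invr_gt0 //; apply: HMh.
apply: (@le_lt_trans _ _ (`|h| * 2)); first by rewrite mulr2n mulrDr mulr1 lerD2l ler_piMl.
by rewrite -ltr_pdivlMr.
Qed.

End Core.
End A2.
Import A2.

Module A3.
Import Defs.
Import Order.TTheory GRing.Theory Num.Theory.
Import numFieldNormedType.Exports.
Local Open Scope ring_scope.
Local Open Scope classical_set_scope.

Ltac ceq := apply/eqP; rewrite eq_complex /=; apply/andP; split; apply/eqP; field.

Section BmVals.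
Variables (R : realType) (n : nat).
Local Notation Pt := (Pt R n).

Lemma f0 : (false%:R : R) = 0. Proof. by []. Qed.
Lemma f1 : (true%:R : R) = 1. Proof. by []. Qed.

Lemma eq_lr (j k : 'I_n.+1) : (lshift n.+1 j == rshift n.+1 k) = false.
Proof.
apply/negbTE; rewrite -val_eqE /= neq_ltn.
by rewrite (leq_trans (ltn_ord j)) ?leq_addr.
Qed.
Lemma eq_rl (j k : 'I_n.+1) : (rshift n.+1 j == lshift n.+1 k) = false.
Proof. by rewrite eq_sym eq_lr. Qed.
Lemma eq_ll (j k : 'I_n.+1) : (lshift n.+1 j == lshift n.+1 k) = (j == k).
Proof. by apply/eqP/eqP => [/lshift_inj|->]. Qed.
Lemma eq_rr (j k : 'I_n.+1) : (rshift n.+1 j == rshift n.+1 k) = (j == k).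
Proof. by apply/eqP/eqP => [/rshift_inj|->]. Qed.

Lemma Bm_dir a b : Bm (dir a : Pt) (dir b) = \sum_(j < n.+1 | (j < n.-1)%N)
  2 * ((lshift n.+1 j == a)%:R * (lshift n.+1 j == b)%:R +
       (rshift n.+1 j == a)%:R * (rshift n.+1 j == b)%:R).
Proof. by rewrite /Bm; apply: eq_bigr => j _; rewrite /xc /yc /dir !mxE. Qed.

Lemma Bm_ll (k j : 'I_n.+1) : (j < n.-1)%N ->
  Bm (dir (lshift n.+1 k) : Pt) (dir (lshift n.+1 j)) = 2 * (k == j)%:R.
Proof.
move=> jn; rewrite Bm_dir (bigD1 j) //= big1 ?addr0 => [|j' /andP[_ ne]].
  by rewrite !eq_ll !eq_rl eqxx eq_sym !f0 f1 mulr1 mulr0 addr0.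
by rewrite !eq_ll !eq_rl (negbTE ne) !f0 !mulr0 addr0 mulr0.
Qed.
Lemma Bm_rr (k j : 'I_n.+1) : (j < n.-1)%N ->
  Bm (dir (rshift n.+1 k) : Pt) (dir (rshift n.+1 j)) = 2 * (k == j)%:R.
Proof.
move=> jn; rewrite Bm_dir (bigD1 j) //= big1 ?addr0 => [|j' /andP[_ ne]].
  by rewrite !eq_rr !eq_lr eqxx eq_sym !f0 f1 mulr1 mulr0 add0r.
by rewrite !eq_rr !eq_lr (negbTE ne) !f0; ring.
Qed.
Lemma Bm_lr (k j : 'I_n.+1) :
  Bm (dir (lshift n.+1 k) : Pt) (dir (rshift n.+1 j)) = 0.
Proof.
by rewrite Bm_dir big1 // => j' _; rewrite !eq_lr !eq_rl !f0; ring.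
Qed.
Lemma Bm_rl (k j : 'I_n.+1) :
  Bm (dir (rshift n.+1 k) : Pt) (dir (lshift n.+1 j)) = 0.
Proof.
by rewrite Bm_dir big1 // => j' _; rewrite !eq_lr !eq_rl !f0; ring.
Qed.
End BmVals.
Arguments Bm_ll {R n}. Arguments Bm_rr {R n}. Arguments Bm_lr {R n}. Arguments Bm_rl {R n}. Arguments eq_lr {n}. Arguments eq_rl {n}. Arguments eq_ll {n}. Arguments eq_rr {n}. Arguments f0 {R}. Arguments f1 {R}.

Section Vals.
Variables (R : realType) (n : nat) (rho : Pt R n -> R) (eps C del : R).
Local Notation Pt := (Pt R n).
Hypothesis eps0 : 0 < eps.
Hypothesis Hsm : forall ds (p : Pt), `|p| < eps -> differentiable (iterD ds rho) p.
Hypothesis C0 : 0 < C.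
Hypothesis del0 : 0 < del.
Hypothesis Hb : forall p : Pt, `|p| < del -> `|rho p - model p| <= C * `|p| ^+ 3.

Lemma partial_lift (w : Pt) q : partial w (liftC rho) q = Complex ('D_w rho q) 0.
Proof. by rewrite /partial; congr Complex; exact: (derive_cst (0:R) q w). Qed.

Lemma rhoW_E j q : rhoW rho j q =
  Complex (2^-1 * 'D_(@ex R n j) rho q) (- (2^-1 * 'D_(@ey R n j) rho q)).
Proof. by rewrite /rhoW /dw !partial_lift; ceq. Qed.

Lemma ReW j : (fun q => complex.Re (rhoW rho j q)) = (fun q => 2^-1 * 'D_(@ex R n j) rho q).
Proof. by apply/funext => q; rewrite rhoW_E. Qed.
Lemma ImW j : (fun q => complex.Im (rhoW rho j q)) = (fun q => (- 2^-1) * 'D_(@ey R n j) rho q).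
Proof. by apply/funext => q; rewrite rhoW_E /= mulNr. Qed.

Lemma Dscale (f : Pt -> R) (c : R) (w x : Pt) : derivable f x w ->
  'D_w (fun q => c * f q) x = c * 'D_w f x.
Proof. by move=> df; exact: (deriveZ c df). Qed.


Lemma partial_rhoW (d : 'I_(n.+1 + n.+1)) j :
  partial (dir d) (rhoW rho j) 0 =
  Complex (2^-1 * Bm (dir d) (@ex R n j)) ((- 2^-1) * Bm (dir d) (@ey R n j)).
Proof.
have e0 : `|0 : Pt| < eps by rewrite normr0.
rewrite /partial ReW ImW !Dscale.
- rewrite (@D2 R n rho eps C del eps0 Hsm C0 del0 Hb d (lshift n.+1 j)).
  by rewrite (@D2 R n rho eps C del eps0 Hsm C0 del0 Hb d (rshift n.+1 j)).
- exact/diff_derivable/(Hsm [:: rshift n.+1 j]).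
- exact/diff_derivable/(Hsm [:: lshift n.+1 j]).
Qed.

Lemma D1dir (d : 'I_(n.+1 + n.+1)) :
  'D_(dir d) rho 0 = - (rshift n.+1 ord_max == d)%:R.
Proof.
rewrite (@D1 R n rho C del C0 del0 Hb _ (norm_dir d)) /Lm big1 ?addr0.
  by rewrite /yc /dir mxE eqxx.
by move=> j _; rewrite /xc /yc !mxE !mul0r add0r mulr0.
Qed.

Lemma rhoW0 (j : 'I_n.+1) : rhoW rho j 0 = Complex 0 (2^-1 * (j == ord_max)%:R).
Proof.
rewrite rhoW_E (D1dir (lshift n.+1 j)) (D1dir (rshift n.+1 j)) eq_rl eq_rr f0.
by rewrite eq_sym; ceq.
Qed.

Lemma dwbarL (m : 'I_n.+1) : dwbar m (liftC rho) 0 = Complex 0 (- (2^-1 * (m == ord_max)%:R)).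
Proof.
rewrite /dwbar !partial_lift (D1dir (lshift n.+1 m)) (D1dir (rshift n.+1 m)) eq_rl eq_rr f0.
by rewrite eq_sym; ceq.
Qed.

Lemma dwbarW (m j : 'I_n.+1) : (j < n.-1)%N -> dwbar m (rhoW rho j) 0 = Complex (m == j)%:R 0.
Proof.
move=> jn; rewrite /dwbar (partial_rhoW (lshift n.+1 m)) (partial_rhoW (rshift n.+1 m)).
by rewrite (Bm_ll m j jn) (Bm_rr m j jn) (Bm_lr m j) (Bm_rl m j); ceq.
Qed.

Lemma LamW (k : nat) (j : 'I_n.+1) : (k < n)%N -> (j < n.-1)%N ->
  Lam rho k (rhoW rho j) 0 = Complex (k == j :> nat)%:R 0.
Proof.
move=> kn jn; rewrite /Lam !dwbarL !dwbarW //.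
have -> : (inord k == ord_max :> 'I_n.+1) = false.
  by apply/negbTE; rewrite -val_eqE /= inordK ?ltn_eqF // ltnS ltnW.
have -> : (inord k == j :> 'I_n.+1) = (k == j :> nat).
  by rewrite -val_eqE /= inordK // ltnS ltnW.
by rewrite eqxx f0 f1; ceq.
Qed.

End Vals.
End A3.
Import A3.

Module A4.
Import Defs.
Import Order.TTheory GRing.Theory Num.Theory.
Import numFieldNormedType.Exports.
Local Open Scope ring_scope.

Section LinAlg.
Variables (R : realType) (n : nat) (rho : Pt R n -> R).
Hypothesis n2 : (2 <= n)%N.
Hypothesis H0 : forall j : 'I_n.+1, rhoW rho j 0 = Complex 0 (2^-1 * (j == ord_max)%:R).
Hypothesis HL : forall (k : nat) (j : 'I_n.+1), (k < n)%N -> (j < n.-1)%N ->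
  Lam rho k (rhoW rho j) 0 = Complex (k == j :> nat)%:R 0.

Definition Vm : 'M[R[i]]_(n, n.+1) := \matrix_(r < n, j < n.+1)
  (if r == 0 :> nat then rhoW rho j 0 else Lam rho r.-1 (rhoW rho j) 0).

Lemma C0E : Complex (0 : R) 0 = 0. Proof. by []. Qed.
Lemma C1E : Complex (1 : R) 0 = 1. Proof. by []. Qed.

Lemma Vm_free : row_free Vm.
Proof.
rewrite -kermx_eq0; apply/rowV0P => u /sub_kermxP uV0.
have Hc j : \sum_(r < n) u 0 r * Vm r j = 0.
  by have := congr1 (fun M : 'M[R[i]]_(1, n.+1) => M 0 j) uV0; rewrite !mxE.
have ur (r : 'I_n) : (0 < r)%N -> u 0 r = 0.
  move=> r0; pose j : 'I_n.+1 := inord r.-1.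
  have rn := ltn_ord r.
  have jv : (j : nat) = r.-1 by rewrite inordK //; lia.
  have jn : (j < n.-1)%N by rewrite jv; lia.
  have := Hc j; rewrite (bigD1 r) //= big1 ?addr0.
    rewrite mxE (negbTE (lt0n_neq0 r0)) HL //; last by lia.
    by rewrite jv eqxx C1E mulr1.
  move=> r' ner; rewrite mxE; case: eqP => [r'0|/eqP r'0].
    rewrite H0; have -> : (j == ord_max) = false.
      by apply/negbTE; rewrite -val_eqE /= jv; apply/eqP; lia.
    by rewrite mulr0 C0E mulr0.
  have r'n := ltn_ord r'.
  rewrite HL //; last by lia.
  have -> : (r'.-1 == j :> nat) = false.
    apply/negbTE; rewrite jv; apply: contra ner => /eqP e; apply/eqP/val_inj => /=.
    move: r'0 => /eqP r'0; lia.
  by rewrite C0E mulr0.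
have n0 : (0 < n)%N by lia.
pose r0 : 'I_n := Ordinal n0.
have nz : Complex (0:R) (2^-1 * true%:R) != 0.
  rewrite eq_complex /= negb_and; apply/orP; right.
  by rewrite (_ : true%:R = 1) // mulr1 invr_eq0 pnatr_eq0.
have u0 : u 0 r0 = 0.
  have := Hc ord_max; rewrite (bigD1 r0) //= big1 ?addr0.
    rewrite mxE eqxx H0 eqxx => /eqP; rewrite mulf_eq0 (negbTE nz) orbF.
    by move/eqP.
  move=> r' ner; rewrite ur ?mul0r //; rewrite lt0n; apply: contra ner => /eqP e.
  by apply/eqP/val_inj.
apply/rowP => r; rewrite mxE; have [r00|r0pos] := posnP r; last exact: ur.
by rewrite (_ : r = r0) //; apply/val_inj.
Qed.

Definition gv s : 'rV[R[i]]_(n.+1) := \row_j Lam_seq rho s (rhoW rho j) 0.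

Lemma Delta_w s (r : 'I_n) j : Delta_mx rho s 0 (widen_ord (leqnSn n) r) j = Vm r j.
Proof. by rewrite !mxE /= ltn_ord. Qed.

Lemma Delta_max s j : Delta_mx rho s 0 ord_max j = gv s 0 j.
Proof.
rewrite !mxE /= ltnn; have -> : (n == 0)%N = false by lia.
by [].
Qed.

Lemma det_ne0 s : ~~ (gv s <= Vm)%MS -> \det (Delta_mx rho s 0) != 0.
Proof.
move=> ngV; rewrite -unitfE -unitmxE -row_free_unit -kermx_eq0.
apply/rowV0P => u /sub_kermxP uD0.
pose w : 'rV_n := \row_r u 0 (widen_ord (leqnSn n) r).
have key j : (w *m Vm) 0 j + u 0 ord_max * gv s 0 j = 0.
  have E : (w *m Vm) 0 j + u 0 ord_max * gv s 0 j = (u *m Delta_mx rho s 0) 0 j.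
    rewrite [RHS]mxE big_ord_recr /= Delta_max; congr (_ + _).
    by rewrite mxE; apply: eq_bigr => r _; rewrite Delta_w; congr (_ * _); rewrite mxE.
  by rewrite E uD0 mxE.
have [um|um] := eqVneq (u 0 ord_max) 0.
  have wV : w *m Vm = 0.
    by apply/rowP => j; move: (key j); rewrite um mul0r addr0 => ->; rewrite mxE.
  have w0 : w = 0.
    by have := Vm_free; rewrite -kermx_eq0 => /rowV0P; apply; exact/sub_kermxP.
  apply/rowP => r; rewrite [RHS]mxE; have [rn|rn] := ltnP r n.
    have := congr1 (fun M : 'rV_n => M 0 (Ordinal rn)) w0; rewrite !mxE.
    by rewrite (_ : widen_ord _ _ = r) //; apply/val_inj.
  by rewrite (_ : r = ord_max) //; apply/val_inj => /=; have := ltn_ord r; lia.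
case/negP: ngV.
have -> : gv s = (- (u 0 ord_max)^-1) *: (w *m Vm).
  apply/rowP => j; have := key j; move/eqP; rewrite addr_eq0 => /eqP e.
  by rewrite [RHS]mxE e; field.
by rewrite scalemxAl submxMl.
Qed.
End LinAlg.
End A4.
Import A4.

Module A5.
Import Defs.
Import Order.TTheory GRing.Theory Num.Theory.
Import numFieldNormedType.Exports.
Local Open Scope ring_scope.

Section Comb.
Variables (R : realType) (n : nat) (rho : Pt R n -> R).

Lemma Lam_seq_cat s1 s2 f : Lam_seq rho (s1 ++ s2) f = Lam_seq rho s1 (Lam_seq rho s2 f).
Proof. by rewrite /Lam_seq foldr_cat. Qed.

Lemma Lam_seq_nseq m i f : Lam_seq rho (nseq m i) f = iter m (Lam rho i) f.
Proof. by elim: m => //= m ->. Qed.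

Definition aseq (f : 'I_n -> nat) : seq 'I_n := flatten [seq nseq (f i) i | i <- enum 'I_n].

Lemma Lam_alphaE l (alpha : {ffun 'I_n -> 'I_l.+1}) f :
  Lam_alpha rho alpha f = Lam_seq rho (aseq (fun i => alpha i)) f.
Proof.
rewrite /Lam_alpha /aseq; elim: (enum 'I_n) => //= i s IH.
by rewrite Lam_seq_cat Lam_seq_nseq IH.
Qed.

Lemma size_aseq (f : 'I_n -> nat) : size (aseq f) = (\sum_i f i)%N.
Proof.
rewrite /aseq size_flatten /shape -map_comp sumnE big_map.
by rewrite big_enum; apply: eq_bigr => i _; rewrite /= size_nseq.
Qed.

Let le_ord := fun a b : 'I_n => (a <= b)%N.

Lemma pw_nseq m (i : 'I_n) : pairwise le_ord (nseq m i).
Proof.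
elim: m => //= m ->; rewrite andbT; apply/allP => x /nseqP [-> _].
exact: leqnn.
Qed.

Lemma pw_flat (f : 'I_n -> nat) s : pairwise le_ord s ->
  pairwise le_ord (flatten [seq nseq (f i) i | i <- s]).
Proof.
elim: s => //= i s IH /andP[alli pws].
rewrite pairwise_cat pw_nseq IH // !andbT.
apply/(@allrelP _ _ le_ord) => x y /nseqP[-> _] /flattenP [t /mapP [k ks ->] /nseqP [-> _]].
exact: (allP alli k ks).
Qed.

Lemma sorted_aseq (f : 'I_n -> nat) : sorted le_ord (aseq f).
Proof.
have tr : transitive le_ord by move=> a b c; apply: leq_trans.
rewrite sorted_pairwise //; apply: pw_flat; rewrite -sorted_pairwise //.
by have := iota_sorted 0 n; rewrite -val_enum_ord sorted_map.
Qed.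

Lemma aseq0 (f : 'I_n -> nat) : (forall i, f i = 0%N) -> aseq f = [::].
Proof. by move=> f0; rewrite /aseq; elim: (enum 'I_n) => //= i s ->; rewrite f0. Qed.

Lemma aseq1 (f : 'I_n -> nat) k : (forall i, f i = (i == k)) -> aseq f = [:: k].
Proof.
move=> fk; rewrite /aseq.
have -> : flatten [seq nseq (f i) i | i <- enum 'I_n] = seq.filter (pred1 k) (enum 'I_n).
  by elim: (enum 'I_n) => //= i s ->; rewrite fk; case: (i == k).
by rewrite filter_pred1_uniq ?enum_uniq ?mem_enum.
Qed.

End Comb.
End A5.
Import A5.

Theorem lemma5p1 (R : realType) (n : nat) (rho : Pt R n -> R) (l : nat) :
  (2 <= n)%N ->
  smooth_near0 rho ->
  (* rho = model + phi with phi = O(|W|^3) near 0 *)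
  (exists2 C : R, 0 < C & exists2 delta : R, 0 < delta &
     forall p : Pt R n, `|p| < delta -> `|rho p - model p| <= C * `|p| ^+ 3) ->
  (2 <= l)%N ->
  k_nondegenerate rho l 0 ->
  exists s : seq 'I_n,
    [/\ size s = l, sorted (fun a b : 'I_n => (a <= b)%N) s &
        \det (Delta_mx rho s 0) != 0].
Proof.
move=> n2 [eps eps0 Hsm] [C C0 [del del0 Hb]] l2 [neq full].
have H0 := @rhoW0 R n rho C del C0 del0 Hb.
have HL := @LamW R n rho eps C del eps0 Hsm C0 del0 Hb.
have Vf := @Vm_free R n rho n2 H0 HL.
set V := @Vm R n rho in Vf *.
set E1 := Espace rho l.-1 0 in neq *.
set E2 := Espace rho l 0 in neq full *.
have S1 : (V <= E1)%MS.
  apply/row_subP => r; have rn := ltn_ord r.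
  have [r0|r0] := eqVneq (r : nat) 0%N.
    pose a0 : {ffun 'I_n -> 'I_(l.-1).+1} := [ffun => ord0].
    have -> : row r V = \row_j Lam_alpha rho a0 (rhoW rho j) 0.
      apply/rowP => j; rewrite !mxE r0 /= Lam_alphaE aseq0 // => i.
      by rewrite ffunE.
    apply: (sumsmx_sup a0); last by rewrite genmxE.
    by rewrite big1 // => i _; rewrite ffunE.
  have kn : (r.-1 < n)%N by lia.
  pose k : 'I_n := Ordinal kn.
  pose a1 : {ffun 'I_n -> 'I_(l.-1).+1} := [ffun i => if i == k then inord 1 else ord0].
  have a1v i : (a1 i : nat) = (i == k).
    by rewrite ffunE; case: eqP => _ //=; rewrite inordK //; lia.
  have -> : row r V = \row_j Lam_alpha rho a1 (rhoW rho j) 0.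
    by apply/rowP => j; rewrite !mxE (negbTE r0) Lam_alphaE (@aseq1 n _ k a1v).
  apply: (sumsmx_sup a1); last by rewrite genmxE.
  rewrite (bigD1 k) //= big1 ?a1v ?eqxx //; first lia.
  by move=> i /negbTE ik; rewrite a1v ik.
have rE1 : (\rank E1 <= n)%N.
  rewrite leqNgt; apply/negP => h.
  have rf : (1%:M <= E1)%MS.
    by rewrite sub1mx /row_full eqn_leq rank_leq_col.
  move/andP: full => [_ h1]; apply: (negP neq); apply/andP; split.
    exact: submx_trans (submx1 _) h1.
  exact: submx_trans (submx1 _) rf.
have S2 : (E1 <= V)%MS.
  rewrite -(geq_leqif (mxrank_leqif_sup S1)).
  by move: Vf; rewrite /row_free => /eqP ->.
apply: NNPP => Hno.
have Hg s : size s = l -> sorted (fun a b : 'I_n => (a <= b)%N) s -> (gv R n rho s <= V)%MS.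
  move=> sz so; apply: contraT => ng; exfalso; apply: Hno; exists s; split => //.
  exact: (@det_ne0 R n rho n2 H0 HL s ng).
have S3 : (E2 <= V)%MS.
  apply/sumsmx_subP => alpha asum; rewrite genmxE.
  have ale i : (alpha i <= \sum_i0 alpha i0)%N by rewrite (bigD1 i) //= leq_addr.
  have [lt|ge] := ltnP (\sum_i alpha i) l.
    pose a' : {ffun 'I_n -> 'I_(l.-1).+1} := [ffun i => inord (alpha i)].
    have a'v i : (a' i : nat) = alpha i.
      by rewrite ffunE inordK //; have := ale i; lia.
    have -> : \row_j Lam_alpha rho alpha (rhoW rho j) 0 = \row_j Lam_alpha rho a' (rhoW rho j) 0.
      apply/rowP => j; rewrite !mxE !Lam_alphaE.
      by rewrite (_ : (fun i => (a' i : nat)) = (fun i => alpha i)) //; apply/funext => i; rewrite a'v.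
    apply: submx_trans S2; apply: (sumsmx_sup a'); last by rewrite genmxE.
    rewrite (eq_bigr (fun i => (alpha i : nat))) => [|i _]; last exact: a'v.
    by rewrite -ltnS prednK ?(ltnW l2).
  have sl : (\sum_i alpha i)%N = l by apply/eqP; rewrite eqn_leq ge andbT.
  have -> : \row_j Lam_alpha rho alpha (rhoW rho j) 0 = gv R n rho (@aseq n (fun i => alpha i)).
    by apply/rowP => j; rewrite !mxE Lam_alphaE.
  apply: Hg; first by rewrite size_aseq.
  exact: sorted_aseq.
move/andP: full => [_ h1].
have := mxrankS (submx_trans h1 S3); rewrite mxrank1 => h2.
have := rank_leq_row V; lia.
Qed.
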